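(* For mv-ATL$_\to$, memory is irrelevant, i.e., its semantics can be equivalently given by memoryless strategies.
   Context: Let $\mathcal{L}=(L,\leq)$ be a finite distributive lattice with meet $\sqcap$, join $\sqcup$, least element $\bot$ and greatest element $\top$; for a family of elements, $\inf$ denotes its greatest lower bound (lattice meet) and $\bigsqcup$ its least upper bound (lattice join). A multi-valued concurrent game structure (mv-CGS) over $\mathcal{L}$ is a concurrent game structure $\langle \mathrm{Agt},Q,Act,d,t,AP,V,(L,\leq,\sigma)\rangle$ whose valuation $V:AP\times Q\to L$ assigns lattice values to atomic propositions at states (perfect information). mv-ATL$_\to$ has formulas $\varphi::=c\mid p\mid\varphi\wedge\varphi\mid\varphi\vee\varphi\mid\varphi\to\varphi\mid\langle\!\langle A\rangle\!\rangle X\varphi\mid\langle\!\langle A\rangle\!\rangle\varphi U\varphi\mid\langle\!\langle A\rangle\!\rangle\varphi W\varphi$ (and the dual $[\![A]\!]$ forms), interpreted with $\wedge,\vee$ as $\sqcap,\sqcup$, $[\![\langle\!\langle A\rangle\!\rangle\gamma]\!]_{M,q}=\bigsqcup_{s_A\in\Sigma_A}\inf_{\lambda\in out(q,s_A)}[\![\gamma]\!]_{M,\lambda}$, $[\![[\![A]\!]\gamma]\!]_{M,q}=\inf_{s_A\in\Sigma_A}\bigsqcup_{\lambda\in out(q,s_A)}[\![\gamma]\!]_{M,\lambda}$, $[\![\varphi_1 U\varphi_2]\!]_{M,\lambda}=\bigsqcup_{i\ge 0}\inf_{0\le j<i}\{[\![\varphi_2]\!]_{M,\lambda[i]}\sqcap[\![\varphi_1]\!]_{M,\lambda[j]}\}$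 (analogously for $X$, $W$), and $[\![\varphi_1\to\varphi_2]\!]_{M,q}=\top$ if $[\![\varphi_1]\!]_{M,q}\le[\![\varphi_2]\!]_{M,q}$ and $\bot$ otherwise. $\Sigma_A$ is either the set of perfect recall strategies ($s_a:Q^+\to Act$) or the set of memoryless strategies ($s_a:Q\to Act$), with $s_a$ choosing actions available to $a$. The claim is that both choices of $\Sigma_A$ give the same valuation. This follows from a reduction of multi-valued model checking to 2-valued model checking (via threshold functions on join-irreducible elements, plus fresh propositions for implication subformulas) that is correct independently of the strategy type, together with the fact that perfect recall and memoryless semantics coincide in 2-valued ATL. *)

(* Defs.v *)
From Stdlib Require Import ClassicalEpsilon.
From mathcomp Require Import all_boot all_order.

Set Implicit Arguments.
Unset Strict Implicit.
Unset Printing Implicit Defensive.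

Import Order.Theory.
Local Open Scope order_scope.

Definition pb (P : Prop) : bool :=
  if excluded_middle_informative P then true else false.

Section MvATL.
Context {disp : Order.disp_t} (L : finTBDistrLatticeType disp).

Definition Lsup (I : Type) (f : I -> L) : L :=
  \join_(x : L | pb (exists i, f i = x)) x.
Definition Linf (I : Type) (f : I -> L) : L :=
  \meet_(x : L | pb (exists i, f i = x)) x.

Record mvCGS := MvCGS {
  Agt : finType;
  St : finType;
  Act : finType;
  AP : Type;
  avail : Agt -> St -> {set Act};
  avail_nonempty : forall a q, avail a q != set0;
  trans : St -> (Agt -> Act) -> St;
  V : AP -> St -> L
}.

Inductive formula (AProp : Type) (Ag : finType) : Type :=
| FConst of L
| FProp of AProp
| FAnd of formula AProp Ag & formula AProp Ag
| FOr of formula AProp Ag & formula AProp Ag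
| FImp of formula AProp Ag & formula AProp Ag
| DiaX of {set Ag} & formula AProp Ag
| DiaU of {set Ag} & formula AProp Ag & formula AProp Ag
| DiaW of {set Ag} & formula AProp Ag & formula AProp Ag
| BoxX of {set Ag} & formula AProp Ag
| BoxU of {set Ag} & formula AProp Ag & formula AProp Ag
| BoxW of {set Ag} & formula AProp Ag & formula AProp Ag.

Variable M : mvCGS.

(* Histories Q^+ : a nonempty sequence (q0, [q1; ...; qn]). *)
Definition hist := (St M * seq (St M))%type.
Definition hlast (h : hist) : St M := last h.1 h.2.

(* Collective strategy for a coalition: one history-based function per agent
   (only the components for agents of the coalition are relevant). *)
Definition strat := Agt M -> hist -> Act M.

Definition pr_strat (A : {set Agt M}) (s : strat) : Prop :=
  forall a, a \in A -> forall h, s a h \in avail a (hlast h).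

(* Memoryless strategies s_a : Q -> Act, viewed as history-based functions
   that only look at the last state. *)
Definition ml_strat (A : {set Agt M}) (s : strat) : Prop :=
  exists m : Agt M -> St M -> Act M,
    (forall a, a \in A -> forall q, m a q \in avail a q) /\
    s = (fun a h => m a (hlast h)).

Inductive strat_kind := PerfectRecall | Memoryless.

Definition is_strat (k : strat_kind) (A : {set Agt M}) (s : strat) : Prop :=
  match k with
  | PerfectRecall => pr_strat A s
  | Memoryless => ml_strat A s
  end.

Definition prefix (l : nat -> St M) (i : nat) : hist :=
  (l 0, [seq l j.+1 | j <- iota 0 i]).

Definition out (q : St M) (A : {set Agt M}) (s : strat) (l : nat -> St M)
  : Prop :=
  l 0 = q /\
  forall i, exists alpha : Agt M -> Act M,
    (forall a, alpha a \in avail a (l i)) /\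
    (forall a, a \in A -> alpha a = s a (prefix l i)) /\
    l i.+1 = trans (l i) alpha.

Definition Dia (k : strat_kind) (A : {set Agt M}) (g : (nat -> St M) -> L)
  (q : St M) : L :=
  Lsup (fun s : {s : strat | is_strat k A s} =>
    Linf (fun l : {l : nat -> St M | out q A (proj1_sig s) l} =>
      g (proj1_sig l))).

Definition Box (k : strat_kind) (A : {set Agt M}) (g : (nat -> St M) -> L)
  (q : St M) : L :=
  Linf (fun s : {s : strat | is_strat k A s} =>
    Lsup (fun l : {l : nat -> St M | out q A (proj1_sig s) l} =>
      g (proj1_sig l))).

Definition pX (f : St M -> L) (l : nat -> St M) : L := f (l 1%N).
Definition pU (f1 f2 : St M -> L) (l : nat -> St M) : L :=
  Lsup (fun i : nat => f2 (l i) `&` Linf (fun j : 'I_i => f1 (l j))).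
Definition pW (f1 f2 : St M -> L) (l : nat -> St M) : L :=
  pU f1 f2 l `|` Linf (fun i : nat => f1 (l i)).

Fixpoint eval (k : strat_kind) (phi : formula (AP M) (Agt M)) : St M -> L :=
  match phi with
  | FConst c => fun _ => c
  | FProp p => V p
  | FAnd a b => fun q => eval k a q `&` eval k b q
  | FOr a b => fun q => eval k a q `|` eval k b q
  | FImp a b => fun q => if eval k a q <= eval k b q then \top else \bot
  | DiaX A a => Dia k A (pX (eval k a))
  | DiaU A a b => Dia k A (pU (eval k a) (eval k b))
  | DiaW A a b => Dia k A (pW (eval k a) (eval k b))
  | BoxX A a => Box k A (pX (eval k a))
  | BoxU A a b => Box k A (pU (eval k a) (eval k b))
  | BoxW A a b => Box k A (pW (eval k a) (eval k b))
  end.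

End MvATL.

(* Main.v *)
Require Import Defs.
From mathcomp Require Import all_boot all_order.
From Stdlib Require Import Classical ClassicalEpsilon FunctionalExtensionality.
Set Implicit Arguments. Unset Strict Implicit. Unset Printing Implicit Defensive.

Lemma pbP (P : Prop) : pb P = true <-> P.
Proof. rewrite /pb; case: excluded_middle_informative => h; split => //. Qed.

Section Game.
Context {disp : Order.disp_t} {L : finTBDistrLatticeType disp} (M : mvCGS L).

Notation path := (nat -> St M).
Local Notation prefix := Defs.prefix.

Lemma hlast_prefix (l : path) i : hlast (prefix l i) = l i.
Proof.
rewrite /hlast /prefix /=; case: i => [//|i].
by rewrite -addn1 iotaD map_cat last_cat /= add0n addn1.
Qed.

Lemma prefixS (l : path) i : prefix l i.+1 = (l 0, rcons (prefix l i).2 (l i.+1)).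
Proof.
rewrite /prefix.
have -> : iota 0 i.+1 = rcons (iota 0 i) i by rewrite -cats1 -addn1 iotaD.
by rewrite map_rcons.
Qed.

Definition dact (a : Agt M) (x : St M) : Act M :=
  xchoose (elimT (set0Pn _) (avail_nonempty a x)).

Lemma dactP a x : dact a x \in avail a x.
Proof. exact: (xchooseP (elimT (set0Pn _) (avail_nonempty a x))). Qed.

Fixpoint bpath (q : St M) (nx : hist M -> St M) (n : nat) : hist M :=
  match n with
  | 0 => (q, [::])
  | n'.+1 => (q, rcons (bpath q nx n').2 (nx (bpath q nx n')))
  end.

Lemma build q A (s : strat M) (Hs : pr_strat A s) (Pref : hist M -> St M -> Prop) :
  exists l : path, out q A s l /\ forall i,
    (exists alpha : Agt M -> Act M, (forall a, alpha a \in avail a (l i)) /\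
       (forall a, a \in A -> alpha a = s a (prefix l i)) /\
       Pref (prefix l i) (trans (l i) alpha)) ->
    Pref (prefix l i) (l i.+1).
Proof.
pose valid h (al : Agt M -> Act M) := (forall a, al a \in avail a (hlast h)) /\
       (forall a, a \in A -> al a = s a h).
pose spec h al := valid h al /\ ((exists be, valid h be /\ Pref h (trans (hlast h) be)) ->
   Pref h (trans (hlast h) al)).
have ex h : exists al, spec h al.
  case: (classic (exists be, valid h be /\ Pref h (trans (hlast h) be))) => [[be hb]|hn].
    by exists be; split; [case: hb| move=> _; case: hb].
  exists (fun a => if a \in A then s a h else dact a (hlast h)); split; last by [].
  split=> a.
    case: ifP => aA; [exact: Hs | exact: dactP].
  by move=> aA; rewrite aA.
pose st h := epsilon (inhabits (fun a => dact a (hlast h))) (spec h).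
have stP h : spec h (st h) by apply: epsilon_spec.
pose nx h := trans (hlast h) (st h).
pose l i := hlast (bpath q nx i).
have pre : forall n, prefix l n = bpath q nx n.
  elim => [|n IH]; first by []. by rewrite prefixS IH /l /hlast /= last_rcons.
have lS i : l i.+1 = nx (bpath q nx i) by rewrite /l /hlast /= last_rcons.
have li i : hlast (bpath q nx i) = l i by [].
exists l; split.
  split => // i; exists (st (bpath q nx i)).
  have [[h1 h2] _] := stP (bpath q nx i).
  rewrite pre lS; split; first by move=> a; rewrite -li.
  by split.
move=> i [al [h1 [h2 h3]]]; rewrite pre lS.
have [_ h] := stP (bpath q nx i); apply: h; exists al; split.
  by split => a; rewrite ?li // -pre; apply: h2.
by rewrite li -pre.
Qed.


Definition MLok (A : {set Agt M}) (q : St M) (g : path -> Prop) :=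
  (exists s : strat M, pr_strat A s /\ forall l, out q A s l -> g l) ->
  exists s : strat M, ml_strat A s /\ forall l, out q A s l -> g l.

Lemma ml_pr (A : {set Agt M}) (s : strat M) : ml_strat A s -> pr_strat A s.
Proof. by move=> [m [hm ->]] a aA h; apply: hm. Qed.

Lemma ml_choose (A : {set Agt M}) (R : St M -> (Agt M -> Act M) -> Prop) :
  exists mm : Agt M -> St M -> Act M,
    (forall a, a \in A -> forall x, mm a x \in avail a x) /\
    forall x, (exists be, (forall a, a \in A -> be a \in avail a x) /\ R x be) ->
      R x (fun a => mm a x).
Proof.
pose spec x be := (forall a, a \in A -> be a \in avail a x) /\
   ((exists be, (forall a, a \in A -> be a \in avail a x) /\ R x be) -> R x be).
have ex x : exists be, spec x be.
  case: (classic (exists be, (forall a, a \in A -> be a \in avail a x) /\ R x be)) => [[be hb]|hn].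
    by exists be; split; [case: hb| move=> _; case: hb].
  exists (fun a => dact a x); split; last by [].
  by move=> a _; apply: dactP.
pose c x := epsilon (inhabits (fun a => dact a x)) (spec x).
have cP x : spec x (c x) by apply: epsilon_spec.
exists (fun a x => c x a); split.
  by move=> a aA x; have [h _] := cP x; apply: h.
by move=> x hx; have [_ h] := cP x; apply: h.
Qed.

Lemma ml_out (A : {set Agt M}) (mm : Agt M -> St M -> Act M) q l :
  out q A (fun a h => mm a (hlast h)) l ->
  l 0 = q /\ forall i, exists alpha : Agt M -> Act M,
    (forall a, alpha a \in avail a (l i)) /\
    (forall a, a \in A -> alpha a = mm a (l i)) /\ l i.+1 = trans (l i) alpha.
Proof.
move=> [h0 h]; split => // i; have [al [h1 [h2 h3]]] := h i.
by exists al; split => //; split => // a aA; rewrite h2 // hlast_prefix.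
Qed.

Lemma ml_shift (A : {set Agt M}) (mm : Agt M -> St M -> Act M) q l :
  out q A (fun a h => mm a (hlast h)) l ->
  out (l 1) A (fun a h => mm a (hlast h)) (fun i => l i.+1).
Proof.
move/ml_out => [_ h]; split => // i; have [al [h1 [h2 h3]]] := h i.+1.
by exists al; split => //; split => // a aA; rewrite h2 // hlast_prefix.
Qed.

Lemma MX (A : {set Agt M}) q (P : pred (St M)) : MLok A q (fun l => P (l 1)).
Proof.
move=> [s [Hs Hw]].
pose mm a x := s a (x, [::]).
exists (fun a h => mm a (hlast h)); split.
  by exists mm; split => // a aA x; apply: (Hs a aA (x, [::])).
move=> l Hl; have [l0 Hl'] := ml_out Hl.
have [al [h1 [h2 h3]]] := Hl' 0.
have [l' [Ho Hp]] := build q Hs (fun h y => h = (q, [::]) -> y = l 1).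
have e0 : l' 0 = q by case: Ho.
have -> : l 1 = l' 1.
  symmetry; apply: (Hp 0); last by rewrite /prefix /= e0.
  exists al; rewrite e0 -l0; split => //; split.
    by move=> a aA; rewrite h2 // /mm /prefix /= e0 l0.
  by move=> _; rewrite h3.
exact: Hw.
Qed.

Definition cpre (A : {set Agt M}) (X : St M -> Prop) (x : St M) :=
  exists be : Agt M -> Act M, (forall a, a \in A -> be a \in avail a x) /\
    forall al : Agt M -> Act M, (forall a, al a \in avail a x) ->
      (forall a, a \in A -> al a = be a) -> X (trans x al).

Definition Ub (P1 P2 : pred (St M)) (l : path) :=
  exists i, P2 (l i) /\ forall k, k < i -> P1 (l k).
Definition Wb (P1 P2 : pred (St M)) (l : path) :=
  Ub P1 P2 l \/ forall i, P1 (l i).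

Lemma prefix_cons (l : path) x i :
  prefix (fun n => if n is n'.+1 then l n' else x) i.+1 = (x, l 0 :: (prefix l i).2).
Proof.
rewrite /prefix /=; congr (_, _ :: _).
rewrite -[1]/(1 + 0) iotaDl -map_comp; apply: eq_map => j /=.
by rewrite add1n.
Qed.

Lemma shift_win (A : {set Agt M}) (s : strat M) x al (g : path -> Prop) :
  (forall a, al a \in avail a x) -> (forall a, a \in A -> al a = s a (x, [::])) ->
  pr_strat A s ->
  (forall l, out x A s l -> g l) ->
  exists s', pr_strat A s' /\ forall l', out (trans x al) A s' l' ->
     g (fun n => if n is n'.+1 then l' n' else x).
Proof.
move=> hav hcons Hs Hw.
exists (fun a h => s a (x, h.1 :: h.2)); split.
  by move=> a aA h; have := Hs a aA (x, h.1 :: h.2).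
move=> l' [e0 Hl']; apply: Hw; split => // -[|i].
  by exists al; split => //; split => //; rewrite e0.
have [al' [h1 [h2 h3]]] := Hl' i; exists al'; split => //; split => //.
by move=> a aA; rewrite h2 // prefix_cons /prefix.
Qed.

Lemma MW (A : {set Agt M}) q (P1 P2 : pred (St M)) : MLok A q (Wb P1 P2).
Proof.
pose Z x := exists s : strat M, pr_strat A s /\ forall l, out x A s l -> Wb P1 P2 l.
have key x : Z x -> P2 x \/ (P1 x /\ cpre A Z x).
  move=> [s [Hs Hw]]; case: (boolP (P2 x)) => h2; [by left | right].
  have [l0 [Ho _]] := build x Hs (fun _ _ => True).
  have e0 : l0 0 = x by case: Ho.
  split.
    case: (Hw l0 Ho) => [[i [hi hk]]|hg].
      case: i hi hk => [|i] hi hk; first by rewrite e0 (negbTE h2) in hi.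
      by rewrite -e0; apply: hk.
    by rewrite -e0; apply: hg.
  exists (fun a => s a (x, [::])); split; first by move=> a aA; apply: (Hs a aA (x, [::])).
  move=> al hav hcons.
  have [s' [Hs' Hw']] := shift_win hav hcons Hs Hw.
  exists s'; split => // l' Ho'.
  case: (Hw' l' Ho') => [[[|i] [hi hk]]|hg].
  - by rewrite /= (negbTE h2) in hi.
  - left; exists i; split => // k ki; exact: (hk k.+1 ki).
  - by right => i; apply: (hg i.+1).
move=> hq.
have [mm [hmm hR]] := ml_choose A (fun x be => forall al : Agt M -> Act M,
   (forall a, al a \in avail a x) -> (forall a, a \in A -> al a = be a) -> Z (trans x al)).
exists (fun a h => mm a (hlast h)); split; first by exists mm.
move=> l /ml_out [l0 Hl].
have claim : forall i, (forall k, k < i -> ~~ P2 (l k)) -> Z (l i).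
  elim => [_|i IH hk]; first by rewrite l0.
  have zi : Z (l i) by apply: IH => k ki; apply: hk; exact: leqW.
  case: (key _ zi) => [h2|[_ hc]]; first by rewrite (negbTE (hk i (ltnSn i))) in h2.
  have hr := hR _ hc.
  have [al [h1 [h2 h3]]] := Hl i; rewrite h3; exact: hr.
case: (classic (exists i, P2 (l i))) => [hex|hn].
  left; case: (@ex_minnP (fun i => P2 (l i)) hex) => i hi hmin.
  exists i; split => // k ki.
  have nk : forall k', k' < k -> ~~ P2 (l k').
    move=> k' kk; apply/negP => h; have := hmin k' h.
    by rewrite leqNgt (ltn_trans kk ki).
  case: (key _ (claim k nk)) => [h2|[h1 _]] //.
  by have := hmin k h2; rewrite leqNgt ki.
right => i.
have nk : forall k, k < i -> ~~ P2 (l k) by move=> k _; apply/negP => h; apply: hn; exists k.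
case: (key _ (claim i nk)) => [h2|[h1 _]] //.
by exfalso; apply: hn; exists i.
Qed.

Lemma MU (A : {set Agt M}) q (P1 P2 : pred (St M)) : MLok A q (Ub P1 P2).
Proof.
pose F := fun X : {set St M} => [set x | P2 x || (P1 x && pb (cpre A (fun y => y \in X) x))].
have Fmono : {homo F : X Y / X \subset Y}.
  move=> X Y /subsetP sXY; apply/subsetP => x; rewrite !inE.
  case/orP => [->//|/andP [h1 /pbP [be [hb hc]]]].
  apply/orP; right; rewrite h1 /=; apply/pbP; exists be; split => // al h h'.
  apply: sXY; exact: hc.
have trap : (exists s : strat M, pr_strat A s /\ forall l, out q A s l -> Ub P1 P2 l) ->
    q \in fixset F.
  move=> [s [Hs Hw]]; apply: contraT => hq.
  have [l [Ho Hp]] := build q Hs (fun _ y => y \notin fixset F).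
  have claim : forall i, (forall k, k < i -> P1 (l k)) -> l i \notin fixset F.
    elim => [_|i IH hk]; first by case: Ho => ->.
    have ni := IH (fun k ki => hk k (leqW ki)).
    apply: Hp.
    have : l i \notin F (fixset F) by rewrite (fixsetK Fmono).
    rewrite inE negb_or (hk i (ltnSn i)) /= => /andP [n2 /negP n13].
    have nc : ~ cpre A (fun y => y \in fixset F) (l i) by move=> c; apply: n13; apply/pbP.
    apply: NNPP => hne; apply: nc.
    exists (fun a => s a (prefix l i)); split.
      by move=> a aA; rewrite -[in avail a _](hlast_prefix l i); apply: Hs.
    move=> al hav hcons; apply: NNPP => hnin; apply: hne; exists al; split => //; split.
      by move=> a aA; rewrite hcons.
    by apply/negP.
  have [i [h2 h1]] := Hw l Ho.
  have := claim i h1.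
  have : l i \in F (fixset F) by rewrite inE h2.
  by move=> h; rewrite (fixsetK Fmono) in h; rewrite h.
have [mm [hmm hR]] := ml_choose A (fun x be => forall al : Agt M -> Act M,
   (forall a, al a \in avail a x) -> (forall a, a \in A -> al a = be a) ->
   trans x al \in iter (fix_order F x).-1 F set0).
have claim : forall n x, x \in iter n F set0 ->
    forall l, out x A (fun a h => mm a (hlast h)) l -> Ub P1 P2 l.
  elim => [x|n IH x]; first by rewrite inE.
  move=> hx l Hl; have [l0 Hl'] := ml_out Hl.
  case: (boolP (P2 x)) => h2; first by exists 0; rewrite l0.
  have e := in_iter_fixE Fmono x n.+1; simpl in e; rewrite hx in e.
  move/esym/andP: e => [r0 rn].
  have hxr : x \in iter (fix_order F x) F set0.
    have e := in_iter_fixE Fmono x (fix_order F x); simpl in e.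
    by rewrite e r0 leqnn.
  move: r0 rn hxr; case E: (fix_order F x) => [//|r] _ rn hxr.
  move: hxr; rewrite /= inE (negbTE h2) /= => /andP [h1 /pbP c].
  have c' : cpre A (fun y => y \in iter (fix_order F x).-1 F set0) x by rewrite E.
  have hr := hR x c'.
  rewrite E /= in hr.
  have [al [h1' [h2' h3']]] := Hl' 0.
  have l1 : l 1 \in iter n F set0.
    have : l 1 \in iter r F set0 by rewrite h3' l0; apply: hr => //; rewrite -l0.
    by apply/subsetP/(subset_iter Fmono).
  have [i [hi hk]] := IH (l 1) l1 _ (ml_shift Hl).
  exists i.+1; split => // -[|k] kl; first by rewrite l0.
  exact: hk.
move=> hw; have hq := trap hw.
exists (fun a h => mm a (hlast h)); split; first by exists mm.
move=> l Hl; exact: (claim #|St M| q hq l Hl).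
Qed.

End Game.

Import Order.Theory.
Local Open Scope order_scope.
Section Lat.
Context {disp : Order.disp_t} (L : finTBDistrLatticeType disp).

Definition jprime (j : L) :=
  j != \bot /\ forall a b : L, j <= a `|` b -> j <= a \/ j <= b.

Lemma Lsup_ge I (f : I -> L) i : f i <= Lsup f.
Proof. rewrite /Lsup; move/joinsP: (lexx (\join_(x : L | pb (exists i, f i = x)) x)); apply; apply/pbP; by exists i. Qed.

Lemma Lsup_le I (f : I -> L) y : (forall i, f i <= y) -> Lsup f <= y.
Proof. move=> H; apply/joinsP => x /pbP [i <-]; exact: H. Qed.

Lemma Linf_le I (f : I -> L) i : Linf f <= f i.
Proof. rewrite /Linf; move/meetsP: (lexx (\meet_(x : L | pb (exists i, f i = x)) x)); apply; apply/pbP; by exists i. Qed.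

Lemma Linf_ge I (f : I -> L) y : (forall i, y <= f i) -> y <= Linf f.
Proof. move=> H; apply/meetsP => x /pbP [i <-]; exact: H. Qed.

Lemma Linf_geP I (f : I -> L) y : y <= Linf f <-> forall i, y <= f i.
Proof. split; last exact: Linf_ge. move=> H i; exact: le_trans H (Linf_le f i). Qed.

Lemma prime_big j (r : seq L) (P : pred L) : jprime j ->
  j <= \join_(x <- r | P x) x -> exists x, P x /\ j <= x.
Proof.
move=> [jn0 jp]; elim: r => [|x r IH]; first by rewrite big_nil lex0 (negbTE jn0).
rewrite big_cons; case: ifP => Px; last exact: IH.
by move/jp => [h|/IH //]; exists x.
Qed.

Lemma Lsup_geP j I (f : I -> L) : jprime j -> (j <= Lsup f <-> exists i, j <= f i).
Proof.
move=> jp; split; last by move=> [i h]; exact: le_trans h (Lsup_ge f i).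
by move/(prime_big jp) => [x [/pbP [i <-] h]]; exists i.
Qed.

Lemma join_geP j (a b : L) : jprime j -> (j <= a `|` b <-> j <= a \/ j <= b).
Proof.
move=> [_ jp]; split; first exact: jp.
by case=> h; [apply: lexUl | apply: lexUr].
Qed.

Lemma le_by_prime (x y : L) : (forall j, jprime j -> j <= x -> j <= y) -> x <= y.
Proof.
move: {2}#|[set z : L | z < x]| (leqnn #|[set z : L | z < x]|) => n.
elim: n x => [|n IH] x Hn H.
- have xb : x = \bot.
    apply/eqP; apply: contraT => xn; move: Hn; rewrite leqn0 => /eqP/cards0_eq/setP/(_ \bot).
    by rewrite !inE lt_def xn le0x.
  by rewrite xb le0x.
- have [xb|xn] := eqVneq x \bot; first by rewrite xb le0x.
  case: (classic (jprime x)) => [xp|xnp]; first exact: H.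
  have [a [b [hab [na nb]]]] : exists a b, x <= a `|` b /\ ~ x <= a /\ ~ x <= b.
    apply: NNPP => hn; apply: xnp; split => // a b hab.
    case: (boolP (x <= a)) => ha; first by left.
    case: (boolP (x <= b)) => hb; first by right.
    by exfalso; apply: hn; exists a, b; split => //; split; apply/negP.
  have ex : x = (x `&` a) `|` (x `&` b) by rewrite -meetUr; apply/esym/meet_idPl.
  have sub z : z < x -> (#|[set w : L | (w < z)%O]| <= n)%N.
    move=> zx; rewrite -ltnS; apply: leq_trans Hn; apply: proper_card.
    apply/properP; split.
      by apply/subsetP => w; rewrite !inE => wz; exact: lt_trans wz zx.
    by exists z; rewrite !inE ?ltxx.
  have lt1 c : ~ x <= c -> x `&` c < x.
    move=> nc; rewrite lt_def leIl andbT; apply/negP => /eqP e; apply: nc.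
    by rewrite e leIr.
  rewrite ex leUx; apply/andP; split; apply: IH.
  + exact: sub (lt1 _ na).
  + move=> j jp ja; apply: H => //; exact: le_trans ja (leIl _ _).
  + exact: sub (lt1 _ nb).
  + move=> j jp ja; apply: H => //; exact: le_trans ja (leIl _ _).
Qed.
End Lat.

Local Close Scope order_scope.

Section Main.
Context {disp : Order.disp_t} {L : finTBDistrLatticeType disp} (M : mvCGS L).
Local Notation path := (nat -> St M).

Lemma MLok_iff (A : {set Agt M}) q (g g' : path -> Prop) :
  (forall l, g l <-> g' l) -> MLok A q g' -> MLok A q g.
Proof.
move=> e h [s [Hs Hw]].
have [s' [Hs' Hw']] : exists s' : strat M, ml_strat A s' /\ forall l, out q A s' l -> g' l.
  by apply: h; exists s; split => // l hl; apply/e/Hw.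
by exists s'; split => // l hl; apply/e/Hw'.
Qed.

Lemma notU (P1 P2 : pred (St M)) (l : path) :
  ~ Ub P1 P2 l <-> Wb (fun x => ~~ P2 x) (fun x => ~~ P1 x && ~~ P2 x) l.
Proof.
split.
  move=> hn; case: (classic (exists i, P2 (l i))) => [hex|hno]; last first.
    by right => i; apply/negP => h; apply: hno; exists i.
  left; case: (@ex_minnP (fun i => P2 (l i)) hex) => i0 hi hmin.
  have [k [kl hk]] : exists k, k < i0 /\ ~~ P1 (l k).
    apply: NNPP => hc; apply: hn; exists i0; split => // k kl.
    by apply: contraT => h; exfalso; apply: hc; exists k.
  have np k' : k' < i0 -> ~~ P2 (l k').
    by move=> kk; apply/negP => h; have := hmin k' h; rewrite leqNgt kk.
  exists k; split; first by rewrite hk np.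
  move=> k' kk; apply: np; exact: ltn_trans kk kl.
move=> hw [i [hi hp]]; case: hw => [[k [hk hb]]|hg].
  case/andP: hk => n1 n2.
  case: (ltngtP i k) => ik.
  - by move: (hb i ik); rewrite hi.
  - by move: (hp k ik); rewrite (negbTE n1).
  - by move: n2; rewrite -ik hi.
by move: (hg i); rewrite hi.
Qed.

Lemma notW (P1 P2 : pred (St M)) (l : path) :
  ~ Wb P1 P2 l <-> Ub (fun x => ~~ P2 x) (fun x => ~~ P1 x && ~~ P2 x) l.
Proof.
split.
  move=> hn.
  have hu : ~ Ub P1 P2 l by move=> h; apply: hn; left.
  case/notU: hu => [h|hg]; first exact: h.
  have [i hi] : exists i, ~~ P1 (l i).
    apply: NNPP => hc; apply: hn; right => i; apply: contraT => h; exfalso; apply: hc; by exists i.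
  by exists i; split; [rewrite hi hg | move=> k _; exact: hg].
move=> hu [hU|hG].
  by have := proj2 (notU P1 P2 l) (or_introl hu).
case: hu => [k [hk _]]; case/andP: hk => n1 _.
by move: (hG k); rewrite (negbTE n1).
Qed.

Local Open Scope order_scope.

Lemma Dia_geP k (A : {set Agt M}) (g : path -> L) q (j : L) : jprime j ->
  (j <= Dia k A g q <-> exists s : strat M, is_strat k A s /\ forall l, out q A s l -> j <= g l).
Proof.
move=> jp; rewrite /Dia (Lsup_geP _ jp); split.
  move=> [[s hs] /Linf_geP h]; exists s; split => // l hl.
  exact: (h (exist _ l hl)).
move=> [s [hs h]]; exists (exist _ s hs); apply/Linf_geP => -[l hl]; exact: h.
Qed.

Lemma Box_geP k (A : {set Agt M}) (g : path -> L) q (j : L) : jprime j ->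
  (j <= Box k A g q <-> forall s : strat M, is_strat k A s -> exists l, out q A s l /\ j <= g l).
Proof.
move=> jp; rewrite /Box Linf_geP; split.
  move=> h s hs; have /(Lsup_geP _ jp) [[l hl] hj] := h (exist _ s hs).
  by exists l.
move=> h [s hs]; apply/(Lsup_geP _ jp); have [l [hl hj]] := h s hs.
by exists (exist _ l hl).
Qed.

Lemma Dia_eq (A : {set Agt M}) (g : path -> L) q :
  (forall j, jprime j -> MLok A q (fun l => j <= g l)) ->
  Dia PerfectRecall A g q = Dia Memoryless A g q.
Proof.
move=> H; apply/le_anti/andP; split.
  apply: le_by_prime => j jp /(Dia_geP _ _ _ _ jp) hj.
  apply/(Dia_geP _ _ _ _ jp); exact: H.
apply: Lsup_le => -[s hs].
exact: (Lsup_ge _ (exist (fun s => is_strat PerfectRecall A s) s (ml_pr hs))).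
Qed.

Lemma Box_eq (A : {set Agt M}) (g : path -> L) q :
  (forall j, jprime j -> MLok A q (fun l => ~ j <= g l)) ->
  Box PerfectRecall A g q = Box Memoryless A g q.
Proof.
move=> H; apply/le_anti/andP; split.
  apply: Linf_ge => -[s hs].
  exact: (Linf_le _ (exist (fun s => is_strat PerfectRecall A s) s (ml_pr hs))).
apply: le_by_prime => j jp /(Box_geP _ _ _ _ jp) hj.
apply/(Box_geP _ _ _ _ jp) => s hs; apply: NNPP => hn.
have [s' [hs' hw]] : exists s' : strat M, ml_strat A s' /\ forall l, out q A s' l -> ~ j <= g l.
  by apply: H => //; exists s; split => // l hl hjl; apply: hn; exists l.
by have [l [hl hjl]] := hj s' hs'; apply: (hw l).
Qed.

Lemma pU_geP (f1 f2 : St M -> L) (l : path) j : jprime j ->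
  (j <= pU f1 f2 l <-> Ub (fun x => j <= f1 x) (fun x => j <= f2 x) l).
Proof.
move=> jp; rewrite /pU (Lsup_geP _ jp); split.
  move=> [i]; rewrite lexI => /andP [h2 /Linf_geP h1].
  by exists i; split => // k ki; exact: (h1 (Ordinal ki)).
move=> [i [h2 h1]]; exists i; rewrite lexI h2 /=; apply/Linf_geP => k.
exact: h1 (ltn_ord k).
Qed.

Lemma pW_geP (f1 f2 : St M -> L) (l : path) j : jprime j ->
  (j <= pW f1 f2 l <-> Wb (fun x => j <= f1 x) (fun x => j <= f2 x) l).
Proof.
move=> jp; rewrite /pW (join_geP _ _ jp) (pU_geP _ _ _ jp) Linf_geP; split; by case=> h; [left|right].
Qed.

Lemma ev_eq (A : {set Agt M}) (f1 f2 : St M -> L) q :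
  Dia PerfectRecall A (pX f1) q = Dia Memoryless A (pX f1) q /\
      Dia PerfectRecall A (pU f1 f2) q = Dia Memoryless A (pU f1 f2) q /\
      Dia PerfectRecall A (pW f1 f2) q = Dia Memoryless A (pW f1 f2) q /\
      Box PerfectRecall A (pX f1) q = Box Memoryless A (pX f1) q /\
      Box PerfectRecall A (pU f1 f2) q = Box Memoryless A (pU f1 f2) q /\
      Box PerfectRecall A (pW f1 f2) q = Box Memoryless A (pW f1 f2) q.
Proof.
split; [|split; [|split; [|split; [|split]]]].
- apply: Dia_eq => j jp; apply: (@MLok_iff _ _ _ (fun l => (fun x => j <= f1 x) (l 1%N))).
    by move=> l; split.
  exact: (MX (A:=A) (q:=q) (P:=fun x => j <= f1 x)).
- apply: Dia_eq => j jp; apply: (MLok_iff (fun l => pU_geP f1 f2 l jp)); exact: MU.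
- apply: Dia_eq => j jp; apply: (MLok_iff (fun l => pW_geP f1 f2 l jp)); exact: MW.
- apply: Box_eq => j jp; apply: (@MLok_iff _ _ _ (fun l => ~~ (j <= f1 (l 1%N)))).
    by move=> l; split => [/negP|/negP].
  exact: (MX (A:=A) (q:=q) (P:=fun x => ~~ (j <= f1 x))).
- apply: Box_eq => j jp.
  apply: (@MLok_iff _ _ _ (fun l => ~ Ub (fun x => j <= f1 x) (fun x => j <= f2 x) l)).
    by move=> l; rewrite (pU_geP _ _ _ jp).
  apply: (MLok_iff (fun l => notU _ _ l)); exact: MW.
- apply: Box_eq => j jp.
  apply: (@MLok_iff _ _ _ (fun l => ~ Wb (fun x => j <= f1 x) (fun x => j <= f2 x) l)).
    by move=> l; rewrite (pW_geP _ _ _ jp).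
  apply: (MLok_iff (fun l => notW _ _ l)); exact: MU.
Qed.

End Main.

Theorem theorem5p19 (disp : Order.disp_t) (L : finTBDistrLatticeType disp)
  (M : mvCGS L) (phi : formula L (AP M) (Agt M)) (q : St M) :
  eval PerfectRecall phi q = eval Memoryless phi q.
Proof.
elim: phi q => //=.
- by move=> a IHa b IHb q; rewrite IHa IHb.
- by move=> a IHa b IHb q; rewrite IHa IHb.
- by move=> a IHa b IHb q; rewrite IHa IHb.
- move=> A a IHa q; rewrite (functional_extensionality _ _ IHa).
  by case: (ev_eq A (eval Memoryless a) (eval Memoryless a) q) => ? [? [? [? [? ?]]]].
- move=> A a IHa b IHb q; rewrite (functional_extensionality _ _ IHa) (functional_extensionality _ _ IHb).
  by case: (ev_eq A (eval Memoryless a) (eval Memoryless b) q) => ? [? [? [? [? ?]]]].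
- move=> A a IHa b IHb q; rewrite (functional_extensionality _ _ IHa) (functional_extensionality _ _ IHb).
  by case: (ev_eq A (eval Memoryless a) (eval Memoryless b) q) => ? [? [? [? [? ?]]]].
- move=> A a IHa q; rewrite (functional_extensionality _ _ IHa).
  by case: (ev_eq A (eval Memoryless a) (eval Memoryless a) q) => ? [? [? [? [? ?]]]].
- move=> A a IHa b IHb q; rewrite (functional_extensionality _ _ IHa) (functional_extensionality _ _ IHb).
  by case: (ev_eq A (eval Memoryless a) (eval Memoryless b) q) => ? [? [? [? [? ?]]]].
- move=> A a IHa b IHb q; rewrite (functional_extensionality _ _ IHa) (functional_extensionality _ _ IHb).
  by case: (ev_eq A (eval Memoryless a) (eval Memoryless b) q) => ? [? [? [? [? ?]]]].
Qed.
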